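(* Let $q=2^m>4$ and let $l$ be an integer with $0\leq l\leq 3$. Then there exists a linear $l$-intersection pair of two MDS codes over $\mathbb{F}_q$ with parameters $[q+2,3,q]_q$ and $[q+2,q-1,4]_q$.
   Context: An $[n,k,d]_q$ linear code is a $k$-dimensional subspace of $\mathbb{F}_q^n$ with minimum Hamming distance $d$; it is MDS if $d=n-k+1$. Two linear codes $C_1,C_2\subseteq\mathbb{F}_q^n$ form a linear $l$-intersection pair if $\dim(C_1\cap C_2)=l$. *)

(* Defs.v *)
From HB Require Import structures.
From mathcomp Require Import all_boot all_order all_algebra all_field.
Set Implicit Arguments. Unset Strict Implicit. Unset Printing Implicit Defensive.
Import GRing.Theory.
Local Open Scope ring_scope.

Definition hamming_dist (F : fieldType) (n : nat) (u v : 'rV[F]_n) : nat :=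
  #|[set i : 'I_n | u 0 i != v 0 i]|.

Definition min_dist_eq (F : fieldType) (n : nat) (C : {vspace 'rV[F]_n}) (d : nat) : Prop :=
  (exists u v, [/\ u \in C, v \in C, u != v & hamming_dist u v = d]) /\
  (forall u v, u \in C -> v \in C -> u != v -> (d <= hamming_dist u v)%N).

Definition is_nkd_code (F : fieldType) (n : nat) (C : {vspace 'rV[F]_n}) (k d : nat) : Prop :=
  \dim C = k /\ min_dist_eq C d.

Definition is_MDS (F : fieldType) (n : nat) (C : {vspace 'rV[F]_n}) : Prop :=
  exists d, min_dist_eq C d /\ d = (n - \dim C + 1)%N.

Definition l_intersection_pair (F : fieldType) (n : nat) (C1 C2 : {vspace 'rV[F]_n}) (l : nat) : Prop :=
  \dim (C1 :&: C2)%VS = l.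

(* Main.v *)
Require Import Defs.
From HB Require Import structures.
From mathcomp Require Import all_boot all_order all_algebra all_field.
From mathcomp Require Import ring zify.
Set Implicit Arguments. Unset Strict Implicit. Unset Printing Implicit Defensive.
Import GRing.Theory.
Local Open Scope ring_scope.

Definition i0 : 'I_3 := @Ordinal 3 0 isT.
Definition i1 : 'I_3 := @Ordinal 3 1 isT.
Definition i2 : 'I_3 := @Ordinal 3 2 isT.

Lemma ord3_cases (r : 'I_3) : [\/ r = i0, r = i1 | r = i2].
Proof.
case: r => [[|[|[|k]]] Hk].
- by constructor 1; apply: val_inj.
- by constructor 2; apply: val_inj.
- by constructor 3; apply: val_inj.
- by [].
Qed.

Lemma sum3 (F : fieldType) (f : 'I_3 -> F) : \sum_(r < 3) f r = f i0 + f i1 + f i2.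
Proof.
rewrite !big_ord_recr big_ord0 /= add0r.
by congr (f _ + f _ + f _); apply: val_inj.
Qed.

Definition cmp (F : fieldType) (p : F * F * F) (r : 'I_3) : F :=
  match nat_of_ord r with 0 => p.1.1 | 1 => p.1.2 | _ => p.2 end.

Definition dt (F : fieldType) (a : 'rV[F]_3) (p : F * F * F) :=
  a 0 i0 * p.1.1 + a 0 i1 * p.1.2 + a 0 i2 * p.2.

Definition det3 (F : fieldType) (u v w : F * F * F) : F :=
  u.1.1 * (v.1.2 * w.2 - v.2 * w.1.2)
  - u.1.2 * (v.1.1 * w.2 - v.2 * w.1.1)
  + u.2 * (v.1.1 * w.1.2 - v.1.2 * w.1.1).

Lemma U1 (F : fieldType) (u v w : F * F * F) (a : 'rV[F]_3) :
  det3 u v w != 0 -> dt a u = 0 -> dt a v = 0 -> dt a w = 0 -> a = 0.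
Proof.
move=> hD hu hv hw; apply/rowP => r; rewrite mxE.
suff [h0 h1 h2] : [/\ a 0 i0 = 0, a 0 i1 = 0 & a 0 i2 = 0].
  by have := ord3_cases r; case=> ->.
move: hu hv hw; rewrite /dt.
move: (a 0 i0) (a 0 i1) (a 0 i2) => x y z hu hv hw.
have E0 : det3 u v w * x = (x * u.1.1 + y * u.1.2 + z * u.2) * (v.1.2 * w.2 - v.2 * w.1.2)
   + (x * v.1.1 + y * v.1.2 + z * v.2) * (w.1.2 * u.2 - w.2 * u.1.2)
   + (x * w.1.1 + y * w.1.2 + z * w.2) * (u.1.2 * v.2 - u.2 * v.1.2) by rewrite /det3; ring.
have E1 : det3 u v w * y = (x * u.1.1 + y * u.1.2 + z * u.2) * (v.2 * w.1.1 - v.1.1 * w.2)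
   + (x * v.1.1 + y * v.1.2 + z * v.2) * (w.2 * u.1.1 - w.1.1 * u.2)
   + (x * w.1.1 + y * w.1.2 + z * w.2) * (u.2 * v.1.1 - u.1.1 * v.2) by rewrite /det3; ring.
have E2 : det3 u v w * z = (x * u.1.1 + y * u.1.2 + z * u.2) * (v.1.1 * w.1.2 - v.1.2 * w.1.1)
   + (x * v.1.1 + y * v.1.2 + z * v.2) * (w.1.1 * u.1.2 - w.1.2 * u.1.1)
   + (x * w.1.1 + y * w.1.2 + z * w.2) * (u.1.1 * v.1.2 - u.1.2 * v.1.1) by rewrite /det3; ring.
rewrite hu hv hw !mul0r !addr0 in E0 E1 E2.
split; apply/eqP.
- by move/eqP: E0; rewrite mulf_eq0 (negbTE hD).
- by move/eqP: E1; rewrite mulf_eq0 (negbTE hD).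
- by move/eqP: E2; rewrite mulf_eq0 (negbTE hD).
Qed.

Lemma U2 (F : fieldType) (u v w : F * F * F) (x y z : F) :
  det3 u v w != 0 -> (forall r, x * cmp u r + y * cmp v r + z * cmp w r = 0) ->
  [/\ x = 0, y = 0 & z = 0].
Proof.
move=> hD hr; have e0 := hr i0; have e1 := hr i1; have e2 := hr i2.
rewrite /cmp /= in e0 e1 e2.
have E0 : det3 u v w * x = (x * u.1.1 + y * v.1.1 + z * w.1.1) * (v.1.2 * w.2 - v.2 * w.1.2)
  + (x * u.1.2 + y * v.1.2 + z * w.1.2) * (v.2 * w.1.1 - v.1.1 * w.2)
  + (x * u.2 + y * v.2 + z * w.2) * (v.1.1 * w.1.2 - v.1.2 * w.1.1) by rewrite /det3; ring.
have E1 : det3 u v w * y = (x * u.1.1 + y * v.1.1 + z * w.1.1) * (w.1.2 * u.2 - w.2 * u.1.2)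
  + (x * u.1.2 + y * v.1.2 + z * w.1.2) * (w.2 * u.1.1 - w.1.1 * u.2)
  + (x * u.2 + y * v.2 + z * w.2) * (w.1.1 * u.1.2 - w.1.2 * u.1.1) by rewrite /det3; ring.
have E2 : det3 u v w * z = (x * u.1.1 + y * v.1.1 + z * w.1.1) * (u.1.2 * v.2 - u.2 * v.1.2)
  + (x * u.1.2 + y * v.1.2 + z * w.1.2) * (u.2 * v.1.1 - u.1.1 * v.2)
  + (x * u.2 + y * v.2 + z * w.2) * (u.1.1 * v.1.2 - u.1.2 * v.1.1) by rewrite /det3; ring.
rewrite e0 e1 e2 !mul0r !addr0 in E0 E1 E2.
split; apply/eqP.
- by move/eqP: E0; rewrite mulf_eq0 (negbTE hD).
- by move/eqP: E1; rewrite mulf_eq0 (negbTE hD).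
- by move/eqP: E2; rewrite mulf_eq0 (negbTE hD).
Qed.

Lemma cramer (F : fieldType) (u v w y : F * F * F) (r : 'I_3) :
  det3 y v w * cmp u r + det3 u y w * cmp v r + det3 u v y * cmp w r
  = det3 u v w * cmp y r.
Proof. by have := ord3_cases r; case=> ->; rewrite /cmp /det3 /=; ring. Qed.

Definition cross (F : fieldType) (u v : F * F * F) : 'rV[F]_3 :=
  \row_(r < 3) cmp (u.1.2 * v.2 - u.2 * v.1.2, u.2 * v.1.1 - u.1.1 * v.2,
                     u.1.1 * v.1.2 - u.1.2 * v.1.1) r.

Lemma dt_cross1 (F : fieldType) (u v : F * F * F) : dt (cross u v) u = 0.
Proof. by rewrite /dt !mxE /cmp /=; ring. Qed.
Lemma dt_cross2 (F : fieldType) (u v : F * F * F) : dt (cross u v) v = 0.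
Proof. by rewrite /dt !mxE /cmp /=; ring. Qed.
Lemma dt_cross3 (F : fieldType) (u v w : F * F * F) : dt (cross u v) w = det3 u v w.
Proof. by rewrite /dt !mxE /cmp /det3 /=; ring. Qed.

Definition Gm (F : fieldType) N (g : 'I_N -> F * F * F) : 'M[F]_(3, N) :=
  \matrix_(r < 3, i < N) cmp (g i) r.
Definition Hm (F : fieldType) N (h : 'I_N -> F * F * F) : 'M[F]_(N, 3) :=
  \matrix_(i < N, r < 3) cmp (h i) r.

Lemma GmE (F : fieldType) N (g : 'I_N -> F * F * F) (a : 'rV[F]_3) i :
  (a *m Gm g) 0 i = dt a (g i).
Proof. by rewrite !mxE sum3 !mxE. Qed.

Lemma HmE (F : fieldType) N (h : 'I_N -> F * F * F) (x : 'rV[F]_N) r :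
  (x *m Hm h) 0 r = \sum_i x 0 i * cmp (h i) r.
Proof. by rewrite !mxE; apply: eq_bigr => i _; rewrite mxE. Qed.

Definition wt (F : fieldType) N (u : 'rV[F]_N) := #|[set i | u 0 i != 0]|.

Lemma hd_wt (F : fieldType) N (u v : 'rV[F]_N) : hamming_dist u v = wt (u - v).
Proof.
rewrite /hamming_dist /wt; apply: eq_card => i; rewrite !inE !mxE.
by rewrite subr_eq0.
Qed.

Lemma min_dist_lin (F : fieldType) N (C : {vspace 'rV[F]_N}) d :
  (exists u, [/\ u \in C, u != 0 & wt u = d]) ->
  (forall u, u \in C -> u != 0 -> (d <= wt u)%N) -> min_dist_eq C d.
Proof.
move=> [u [uC u0 wu]] hlb; split.
  by exists u, 0; rewrite hd_wt subr0; split => //; apply: mem0v.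
move=> a b aC bC ab; rewrite hd_wt; apply: hlb; first exact: memvB.
by rewrite subr_eq0.
Qed.

Lemma three_of (N : nat) (Z : {set 'I_N}) : (3 <= #|Z|)%N ->
  exists i j k, [/\ i \in Z, j \in Z, k \in Z & [/\ i != j, i != k & j != k]].
Proof.
move=> hZ.
have hs : (3 <= size (enum Z))%N by rewrite -cardE.
have hu := enum_uniq (mem Z).
case E : (enum Z) hs hu => [|a [|b [|c s]]] //= _.
rewrite !inE !negb_or => /andP[/and3P[ab ac _] /andP[/andP[bc _] _]].
have mZ x : x \in enum Z -> x \in Z by rewrite mem_enum.
exists a, b, c; split => //; apply: mZ; rewrite E !inE eqxx ?orbT //.
Qed.

Lemma cover3 (N : nat) (Z : {set 'I_N}) : (3 <= N)%N -> (#|Z| <= 3)%N ->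
  exists i j k, [/\ i != j, i != k, j != k & forall z, z \in Z -> z \in [:: i; j; k]].
Proof.
move=> hN hZ.
suff [s [hs hu hsub]] : exists s : seq 'I_N,
    [/\ (3 <= size s)%N, uniq s & {subset Z <= take 3 s}].
  move: hs hu hsub; case: s => [|a [|b [|c s']]] //= _.
  rewrite !inE !negb_or => /andP[/and3P[ab ac _] /andP[/andP[bc _] _]] hsub.
  by exists a, b, c; split => // z /hsub; rewrite take0.
pose s0 := enum (mem Z) ++ enum (mem (~: Z)); exists s0; split.
- by rewrite size_cat -!cardE cardsC card_ord.
- rewrite cat_uniq !enum_uniq /= andbT; apply/hasPn => x.
  by rewrite !mem_enum inE.
- move=> z zZ; rewrite take_cat -cardE ltnNge hZ /= mem_cat mem_enum zZ //.
Qed.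

Lemma sum_supp (F : fieldType) N (f : 'I_N -> F) (s : seq 'I_N) : uniq s ->
  (forall l, l \notin s -> f l = 0) -> \sum_l f l = \sum_(l <- s) f l.
Proof.
move=> us hf; rewrite (bigID (fun l => l \in s)) /= [X in _ + X]big1 ?addr0.
  by rewrite big_uniq.
by move=> l /hf.
Qed.

Definition indep (F : fieldType) N (g : 'I_N -> F * F * F) :=
  forall i j k, i != j -> i != k -> j != k -> det3 (g i) (g j) (g k) != 0.

Lemma dim_rV (F : fieldType) n : \dim (fullv : {vspace 'rV[F]_n}) = n.
Proof. by rewrite dimvf /dim /= mul1n. Qed.

Lemma wtC (F : fieldType) N (u : 'rV[F]_N) : wt u = subn N #|[set i | u 0 i == 0]|.
Proof.
have := cardsC [set i | u 0 i == 0]; rewrite cardT size_enum_ord => E.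
rewrite -[X in _ = subn X _]E addKn /wt; by apply: eq_card => i; rewrite !inE.
Qed.

Lemma generic (F : fieldType) (N : nat) (g h : 'I_N -> F * F * F) :
  (3 < N)%N -> indep g -> indep h ->
  let C1 := limg (linfun (@mulmxr _ 1 _ _ (Gm g))) in
  let C2 := lker (linfun (@mulmxr _ 1 _ _ (Hm h))) in
  let fM := linfun (@mulmxr _ 1 _ _ (Gm g *m Hm h)) in
  [/\ is_nkd_code C1 3 (N - 2), is_MDS C1,
      is_nkd_code C2 (N - 3) 4, is_MDS C2 &
      (\dim (C1 :&: C2) + \dim (limg fM))%N = 3].
Proof.
move=> hN ig ih C1 C2 fM.
pose n0 := @Ordinal N 0 (@ltn_trans 3 0 N isT hN).
pose n1 := @Ordinal N 1 (@ltn_trans 3 1 N isT hN).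
pose n2 := @Ordinal N 2 (@ltn_trans 3 2 N isT hN).
pose n3 := @Ordinal N 3 hN.
have d01 : n0 != n1 by []. have d02 : n0 != n2 by []. have d03 : n0 != n3 by [].
have d12 : n1 != n2 by []. have d13 : n1 != n3 by []. have d23 : n2 != n3 by [].
have e01 : (n0 == n1) = false by []. have e02 : (n0 == n2) = false by [].
have e03 : (n0 == n3) = false by []. have e12 : (n1 == n2) = false by [].
have e13 : (n1 == n3) = false by []. have e23 : (n2 == n3) = false by [].
have e10 : (n1 == n0) = false by []. have e20 : (n2 == n0) = false by [].
have e30 : (n3 == n0) = false by []. have e21 : (n2 == n1) = false by [].
have e31 : (n3 == n1) = false by []. have e32 : (n3 == n2) = false by [].
have hN3 : (3 <= N)%N by apply: ltnW.
have memC1 u : u \in C1 -> exists a, u = a *m Gm g.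
  by case/memv_imgP => a _ ->; exists a; rewrite lfunE.
have inC1 a : a *m Gm g \in C1.
  by have := memv_img (linfun (@mulmxr _ 1 _ _ (Gm g))) (memvf a); rewrite lfunE.
have dimC1 : \dim C1 = 3.
  have := limg_ker_dim (linfun (@mulmxr _ 1 _ _ (Gm g))) fullv.
  rewrite dim_rV capfv.
  suff -> : lker (linfun (@mulmxr _ 1 _ _ (Gm g))) = 0%VS by rewrite dimv0.
  apply/eqP; rewrite -subv0; apply/subvP => a; rewrite memv_ker memv0 lfunE /=.
  move/eqP => ha; apply/eqP; apply: (U1 (ig n0 n1 n2 d01 d02 d12)).
  - by move/rowP: ha => /(_ n0); rewrite GmE mxE.
  - by move/rowP: ha => /(_ n1); rewrite GmE mxE.
  - by move/rowP: ha => /(_ n2); rewrite GmE mxE.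
have lbC1 u : u \in C1 -> u != 0 -> (N - 2 <= wt u)%N.
  move=> /memC1 [a ->] u0.
  have Z2 : leq #|[set i | (a *m Gm g) 0 i == 0]| 2.
    rewrite leqNgt; apply/negP => /three_of [i [j [k [iZ jZ kZ [ij ik jk]]]]].
    move: iZ jZ kZ; rewrite !inE !GmE => /eqP hi /eqP hj /eqP hk.
    by move: u0; rewrite (U1 (ig i j k ij ik jk) hi hj hk) mul0mx eqxx.
  by rewrite wtC; apply: leq_sub2l Z2.
have C1MDS : min_dist_eq C1 (N - 2).
  apply: min_dist_lin => //.
  pose a := cross (g n0) (g n1).
  have ha0 : a != 0.
    apply/negP => /eqP a0; have := ig n0 n1 n2 d01 d02 d12.
    by rewrite -dt_cross3 -/a a0 /dt !mxE !mul0r !addr0 eqxx.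
  exists (a *m Gm g); split => //.
    apply/negP => /eqP u0; move/negP: ha0; apply; apply/eqP.
    apply: (U1 (ig n0 n1 n2 d01 d02 d12)).
    - by rewrite dt_cross1.
    - by rewrite dt_cross2.
    - by move/rowP: u0 => /(_ n2); rewrite GmE mxE.
  rewrite wtC.
  have -> : [set i | (a *m Gm g) 0 i == 0] = [set n0; n1].
    apply/setP => i; rewrite !inE GmE.
    case: (eqVneq i n0) => [->|in0]; first by rewrite dt_cross1 eqxx.
    case: (eqVneq i n1) => [->|in1]; first by rewrite dt_cross2 eqxx.
    apply/negP => /eqP hi; move/negP: ha0; apply; apply/eqP.
    apply: (U1 (ig n0 n1 i d01 _ _)) => //.
    - by rewrite eq_sym.
    - by rewrite eq_sym.
    - by rewrite dt_cross1.
    - by rewrite dt_cross2.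
  by rewrite cards2 d01.
have memC2 x : (x \in C2) = (x *m Hm h == 0).
  by rewrite memv_ker lfunE.
have dimC2 : \dim C2 = (N - 3)%N.
  have := limg_ker_dim (linfun (@mulmxr _ 1 _ _ (Hm h))) fullv.
  rewrite dim_rV capfv.
  suff -> : limg (linfun (@mulmxr _ 1 _ _ (Hm h))) = fullv.
    by rewrite dim_rV => E; rewrite -[X in _ = subn X _]E addnK.
  apply/eqP; rewrite eqEsubv subvf /=; apply/subvP => y _.
  pose yv := (y 0 i0, y 0 i1, y 0 i2).
  have hD := ih n0 n1 n2 d01 d02 d12.
  pose D := det3 (h n0) (h n1) (h n2).
  pose x : 'rV[F]_N := \row_l (if l == n0 then det3 yv (h n1) (h n2) / D
     else if l == n1 then det3 (h n0) yv (h n2) / D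
     else if l == n2 then det3 (h n0) (h n1) yv / D else 0).
  have -> : y = linfun (@mulmxr _ 1 _ _ (Hm h)) x.
    rewrite lfunE /=; apply/rowP => r; rewrite HmE.
    rewrite (@sum_supp _ _ _ [:: n0; n1; n2]); last first.
    - move=> l; rewrite !inE !negb_or => /and3P[/negbTE h0 /negbTE h1 /negbTE h2]; by rewrite /x mxE h0 h1 h2 mul0r.
    - by rewrite /= ?inE ?d01 ?d02 ?d12.
    rewrite !big_cons big_nil addr0 /x !mxE !eqxx ?e01 ?e02 ?e10 ?e12 ?e20 ?e21 /=.
    rewrite [RHS](_ : _ = (det3 yv (h n1) (h n2) * cmp (h n0) r + det3 (h n0) yv (h n2) * cmp (h n1) r + det3 (h n0) (h n1) yv * cmp (h n2) r) / D); last by ring.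
    rewrite cramer -/D mulrAC mulfV // mul1r.
    by have := ord3_cases r; case=> -> ; rewrite /cmp /yv /=.
  exact: memv_img (memvf x).
have lbC2 x : x \in C2 -> x != 0 -> (4 <= wt x)%N.
  rewrite memC2 => /eqP hx x0; rewrite leqNgt; apply/negP => hw.
  have [i [j [k [ij ik jk hsub]]]] := cover3 hN3 hw.
  have hz l : l \notin [:: i; j; k] -> x 0 l = 0.
    move=> hl; apply/eqP; apply/negPn/negP => hl0.
    by move: hl; rewrite hsub // inE.
  have [xi [xj xk]] : [/\ x 0 i = 0, x 0 j = 0 & x 0 k = 0].
    apply: (U2 (ih i j k ij ik jk)) => r.
    move/rowP: (hx) => /(_ r); rewrite HmE mxE.
    rewrite (@sum_supp _ _ _ [:: i; j; k]); last first.
    - by move=> l /hz ->; rewrite mul0r.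
    - by rewrite /= !inE !negb_or ij ik jk.
    by rewrite !big_cons big_nil addr0 addrA.
  move: x0; apply/negP; rewrite negbK; apply/eqP/rowP => l; rewrite mxE.
  case: (boolP (l \in [:: i; j; k])) => [|/hz //].
  by rewrite !inE => /or3P[] /eqP ->.
have C2MDS : min_dist_eq C2 4.
  apply: min_dist_lin => //.
  pose x : 'rV[F]_N := \row_l (if l == n0 then det3 (h n3) (h n1) (h n2)
     else if l == n1 then det3 (h n0) (h n3) (h n2)
     else if l == n2 then det3 (h n0) (h n1) (h n3)
     else if l == n3 then - det3 (h n0) (h n1) (h n2) else 0).
  have hz l : l \notin [:: n0; n1; n2; n3] -> x 0 l = 0.
    rewrite !inE !negb_or => /and4P[/negbTE h0 /negbTE h1 /negbTE h2 /negbTE h3].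
    by rewrite /x mxE h0 h1 h2 h3.
  have us : uniq [:: n0; n1; n2; n3] by rewrite /= ?inE.
  have x3 : x 0 n3 = - det3 (h n0) (h n1) (h n2).
    by rewrite /x mxE e30 e31 e32 eqxx.
  have x0 : x != 0.
    apply/negP => /eqP x0; move: x3; rewrite x0 mxE => /eqP; rewrite eq_sym oppr_eq0.
    by rewrite (negbTE (ih n0 n1 n2 d01 d02 d12)).
  have xC2 : x \in C2.
    rewrite memC2; apply/eqP/rowP => r; rewrite HmE mxE (sum_supp us); last first.
      by move=> l /hz ->; rewrite mul0r.
    rewrite !big_cons big_nil addr0 x3 /x !mxE !eqxx ?e01 ?e02 ?e10 ?e12 ?e20 ?e21 /=.
    by rewrite !addrA cramer mulNr addrN.
  exists x; split => //.
  apply/eqP; rewrite eqn_leq (lbC2 x xC2 x0) andbT.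
  have sub : [set l | x 0 l != 0] \subset [set l in [:: n0; n1; n2; n3]].
    apply/subsetP => l; rewrite !in_set => hl; apply/negPn/negP => hn.
    by move: hl; rewrite hz // eqxx.
  apply: leq_trans (subset_leq_card sub) _; rewrite cardsE; apply: card_size.
have E : (linfun (@mulmxr _ 1 _ _ (Hm h)) \o linfun (@mulmxr _ 1 _ _ (Gm g)))%VF = fM.
  by apply/lfunP => a; rewrite comp_lfunE !lfunE /= mulmxA.
have HH := limg_ker_dim (linfun (@mulmxr _ 1 _ _ (Hm h))) C1.
rewrite dimC1 /C1 -limg_comp E in HH.
split.
- by split.
- by exists (N - 2)%N; split => //; rewrite dimC1; lia.
- by split.
- by exists 4%N; split => //; rewrite dimC2; lia.
- exact: HH.
Qed.


Lemma char2_opp (F : fieldType) (h2 : 2%:R = 0 :> F) (x : F) : - x = x.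
Proof.
apply/eqP; rewrite -subr_eq0 -opprD oppr_eq0 -mulr2n -mulr_natr h2 mulr0 //.
Qed.

Definition gp (F : fieldType) (x : (F + bool)%type) : F * F * F :=
  match x with
  | inl t => (1, t, t ^+ 2)
  | inr true => (0, 1, 0)
  | inr false => (0, 0, 1)
  end.

Lemma P12 (F : fieldType) (u v w : F * F * F) : det3 u v w != 0 -> det3 v u w != 0.
Proof.
by rewrite (_ : det3 v u w = - det3 u v w) ?oppr_eq0 // /det3; ring.
Qed.
Lemma P23 (F : fieldType) (u v w : F * F * F) : det3 u v w != 0 -> det3 u w v != 0.
Proof.
by rewrite (_ : det3 u w v = - det3 u v w) ?oppr_eq0 // /det3; ring.
Qed.

Lemma V3 (F : fieldType) (a b c : F) : a != b -> a != c -> b != c ->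
  det3 (gp (inl a)) (gp (inl b)) (gp (inl c)) != 0.
Proof.
move=> ab ac bc; rewrite (_ : det3 _ _ _ = (b - a) * (c - a) * (c - b)); last first.
  by rewrite /det3 /=; ring.
by rewrite !mulf_neq0 // subr_eq0 eq_sym.
Qed.

Lemma V2t (F : fieldType) (h2 : 2%:R = 0 :> F) (a b : F) : a != b ->
  det3 (gp (inl a)) (gp (inl b)) (gp (inr true)) != 0.
Proof.
move=> ab; rewrite (_ : det3 _ _ _ = (a - b) * (a + b)); last first.
  by rewrite /det3 /=; ring.
by rewrite -{2}(char2_opp h2 b) !mulf_neq0 // subr_eq0.
Qed.

Lemma V2f (F : fieldType) (a b : F) : a != b ->
  det3 (gp (inl a)) (gp (inl b)) (gp (inr false)) != 0.
Proof.
move=> ab; rewrite (_ : det3 _ _ _ = (b - a)); last first.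
  by rewrite /det3 /=; ring.
by rewrite subr_eq0 eq_sym.
Qed.

Lemma V1 (F : fieldType) (a : F) :
  det3 (gp (inl a)) (gp (inr true)) (gp (inr false)) != 0.
Proof.
by rewrite (_ : det3 _ _ _ = 1) ?oner_neq0 // /det3 /=; ring.
Qed.

Ltac base h2 := solve [ apply: V3; by [] || by rewrite eq_sym
                      | apply: (V2t h2); by [] || by rewrite eq_sym
                      | apply: V2f; by [] || by rewrite eq_sym
                      | apply: V1 ].
Ltac perm3 h2 := first [ base h2 | apply: P12; base h2 | apply: P23; base h2
  | apply: P12; apply: P23; base h2 | apply: P23; apply: P12; base h2
  | apply: P12; apply: P23; apply: P12; base h2 ].

Lemma indepL (F : fieldType) (h2 : 2%:R = 0 :> F) (x y z : (F + bool)%type) :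
  x != y -> x != z -> y != z -> det3 (gp x) (gp y) (gp z) != 0.
Proof.
case: x => [a|[]]; case: y => [b|[]]; case: z => [c|[]] => hxy hxz hyz.
all: rewrite ?(inj_eq inl_inj) ?eqxx in hxy hxz hyz => //.
- exact: V3.
- exact: V2t.
- exact: V2f.
- exact: P23 (V2t h2 hxz).
- exact: V1.
- exact: P23 (V2f hxz).
- exact: P23 (V1 a).
- exact: P12 (P23 (V2t h2 hyz)).
- exact: P12 (V1 b).
- exact: P23 (P12 (V1 c)).
- exact: P12 (P23 (V2f hyz)).
- exact: P12 (P23 (V1 b)).
- exact: P12 (P23 (P12 (V1 c))).
Qed.

Definition scale (F : fieldType) (k : F) (p : F * F * F) : F * F * F :=
  (k * p.1.1, k * p.1.2, k * p.2).
Definition sig (F : fieldType) (x : (F + bool)%type) : (F + bool)%type :=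
  match x with inl t => inl t^-1 | inr b => inr b end.
Definition scf (F : fieldType) (c0 s1 s2 : F) (x : (F + bool)%type) : F :=
  match x with inl t => if t == 0 then c0 else 1 | inr true => s1 | inr false => s2 end.
Definition hp (F : fieldType) (c0 s1 s2 : F) (x : (F + bool)%type) : F * F * F :=
  scale (scf c0 s1 s2 x) (gp (sig x)).

Lemma det3_scale (F : fieldType) (a b c : F) u v w :
  det3 (scale a u) (scale b v) (scale c w) = a * b * c * det3 u v w.
Proof. by rewrite /det3 /scale /=; ring. Qed.

Lemma sig_inj (F : fieldType) : injective (@sig F).
Proof. by move=> [a|a] [b|b] //= [h]; rewrite ?(invr_inj h) ?h. Qed.

Lemma indepH (F : fieldType) (h2 : 2%:R = 0 :> F) (c0 s1 s2 : F) :
  c0 != 0 -> s1 != 0 -> s2 != 0 -> forall x y z : (F + bool)%type,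
  x != y -> x != z -> y != z -> det3 (hp c0 s1 s2 x) (hp c0 s1 s2 y) (hp c0 s1 s2 z) != 0.
Proof.
move=> c00 s10 s20 x y z xy xz yz; rewrite /hp det3_scale.
have scf0 u : scf c0 s1 s2 u != 0.
  by case: u => [t|[]] //=; case: ifP => _; rewrite ?oner_neq0.
rewrite !mulf_neq0 //; apply: indepL => //; by rewrite (inj_eq (@sig_inj F)).
Qed.

Lemma cmp_scale (F : fieldType) (k : F) p r : cmp (scale k p) r = k * cmp p r.
Proof. by have := ord3_cases r; case=> ->. Qed.

Lemma scsum (F : finFieldType) (c0 : F) (Y : F -> F) :
  \sum_t (if t == 0 then c0 else 1) * Y t = \sum_t Y t + (c0 - 1) * Y 0.
Proof.
rewrite (bigD1 0) //= [in RHS](bigD1 0) //= eqxx.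
rewrite (eq_bigr (fun t => Y t)); last by move=> t /negbTE ->; rewrite mul1r.
by rewrite mulrBl mul1r; ring.
Qed.

Lemma sumS (F : finFieldType) (f : F -> F) : \sum_t f t^-1 = \sum_t f t.
Proof. by rewrite [RHS](reindex_inj (@invr_inj F)). Qed.

Lemma sum1 (F : finFieldType) (w : F) : w != 0 -> w != 1 -> \sum_(t : F) t = 0.
Proof.
move=> w0 w1; have E : \sum_(t : F) t = \sum_(t : F) (w * t).
  by apply: reindex_inj; exact: mulfI.
move: E; rewrite -mulr_sumr => /eqP; rewrite -subr_eq0 -{1}(mul1r (\sum_t t)) -mulrBl.
by rewrite mulf_eq0 subr_eq0 eq_sym (negbTE w1) /= => /eqP.
Qed.

Lemma sum2 (F : finFieldType) (h2 : 2%:R = 0 :> F) (w : F) : w != 0 -> w != 1 ->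
  \sum_(t : F) t ^+ 2 = 0.
Proof.
move=> w0 w1; have E : \sum_(t : F) t ^+ 2 = \sum_(t : F) (w * t) ^+ 2.
  by apply: (reindex_inj (h := fun t => w * t)); exact: mulfI.
move: E; under [X in _ = X]eq_bigr => t _ do rewrite exprMn.
rewrite -mulr_sumr => /eqP; rewrite -subr_eq0 -{1}(mul1r (\sum_t _)) -mulrBl.
have : 1 - w ^+ 2 != 0.
  rewrite (_ : 1 - w ^+ 2 = (1 - w) * (1 + w)); last by ring.
  rewrite mulf_neq0 //; first by rewrite subr_eq0 eq_sym.
  by rewrite -[X in 1 + X](char2_opp h2 w) subr_eq0 eq_sym.
by move=> hw; rewrite mulf_eq0 (negbTE hw) /= => /eqP.
Qed.

Lemma sumtt (F : finFieldType) (hq : #|F|%:R = 0 :> F) : \sum_(t : F) t * t^-1 = -1.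
Proof.
rewrite (bigD1 0) //= invr0 mulr0 add0r.
rewrite (eq_bigr (fun _ => 1)); last by move=> t t0; rewrite mulfV.
have : \sum_(t : F) (1 : F) = 0 by rewrite sumr_const hq.
by rewrite (bigD1 0) //= => /eqP; rewrite addrC addr_eq0 => /eqP.
Qed.

Lemma L12 (F : fieldType) (t : F) : t * t^-1 ^+ 2 = t^-1.
Proof.
case: (eqVneq t 0) => [->|t0]; first by rewrite invr0 mul0r.
by rewrite expr2 mulrA mulfV // mul1r.
Qed.
Lemma L21 (F : fieldType) (t : F) : t ^+ 2 * t^-1 = t.
Proof.
case: (eqVneq t 0) => [->|t0]; first by rewrite invr0 mulr0.
by rewrite expr2 -mulrA mulfV // mulr1.
Qed.
Lemma L22 (F : fieldType) (t : F) : t ^+ 2 * t^-1 ^+ 2 = t * t^-1.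
Proof.
rewrite -exprMn; case: (eqVneq t 0) => [->|t0]; first by rewrite mul0r expr0n.
by rewrite mulfV // expr1n.
Qed.

Lemma Pfin (F : finFieldType) (h2 : 2%:R = 0 :> F) (hq : #|F|%:R = 0 :> F) (w : F) :
  w != 0 -> w != 1 -> forall r s,
  \sum_(t : F) cmp (gp (inl t)) r * cmp (gp (inl t^-1)) s =
  if r == s then (if r == i0 then 0 else -1) else 0.
Proof.
move=> w0 w1 r s.
have S1 := sum1 w0 w1; have S2 := sum2 h2 w0 w1.
have S0 : \sum_(t : F) (1 : F) = 0 by rewrite sumr_const hq.
have Si : \sum_(t : F) t^-1 = 0 by rewrite (sumS id).
have Si2 : \sum_(t : F) t^-1 ^+ 2 = 0 by rewrite (sumS (fun t => t ^+ 2)).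
have := ord3_cases r; have := ord3_cases s; case=> -> ; case=> -> ; rewrite /cmp /=.
- by under eq_bigr => t _ do rewrite mul1r.
- by under eq_bigr => t _ do rewrite mulr1.
- by under eq_bigr => t _ do rewrite mulr1.
- by under eq_bigr => t _ do rewrite mul1r.
- by rewrite sumtt.
- by under eq_bigr => t _ do rewrite L21.
- by under eq_bigr => t _ do rewrite mul1r.
- by under eq_bigr => t _ do rewrite L12.
- by under eq_bigr => t _ do rewrite L22; rewrite sumtt.
Qed.


Lemma sum_enum (R : fieldType) (T : finType) (f : T -> R) :
  \sum_(i < #|T|) f (enum_val i) = \sum_(x : T) f x.
Proof.
rewrite -(big_enum_val (A := T)).
by apply: eq_bigl.
Qed.

Definition Lab (F : finFieldType) : finType := (F + bool)%type.

Lemma Mdiag (F : finFieldType) (h2 : 2%:R = 0 :> F) (hq : #|F|%:R = 0 :> F) (w : F)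
  (w0 : w != 0) (w1 : w != 1) (c0 s1 s2 : F) :
  Gm (fun i : 'I_#|Lab F| => gp (enum_val i)) *m
  Hm (fun i : 'I_#|Lab F| => hp c0 s1 s2 (enum_val i))
  = diag_mx (\row_j cmp (c0 - 1, s1 - 1, s2 - 1) j).
Proof.
apply/matrixP => r s; rewrite !mxE.
under eq_bigr => i _ do rewrite !mxE.
rewrite (sum_enum (fun x => cmp (gp x) r * cmp (hp c0 s1 s2 x) s)).
rewrite big_sumType big_bool /hp /=.
under eq_bigr => t _ do rewrite cmp_scale mulrCA.
rewrite (scsum c0 (fun t => cmp (gp (inl t)) r * cmp (gp (inl t^-1)) s)).
rewrite (Pfin h2 hq w0 w1) invr0.
have := ord3_cases r; have := ord3_cases s; case=> -> ; case=> -> ; rewrite /cmp /=.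
all: by rewrite ?mulr1n ?mulr0n; ring.
Qed.


Lemma diag_act (F : fieldType) (a d : 'rV[F]_3) j : (a *m diag_mx d) 0 j = a 0 j * d 0 j.
Proof. by rewrite mul_mx_diag mxE. Qed.

Lemma all3 (P : 'I_3 -> Prop) : P i0 -> P i1 -> P i2 -> forall j, P j.
Proof. by move=> p0 p1 p2 j; have := ord3_cases j; case=> ->. Qed.

Lemma dim_lim (F : fieldType) (c0 s1 s2 : F) (w : F) : w != 1 ->
  (c0 == w) || (c0 == 1) -> (s1 == w) || (s1 == 1) -> (s2 == w) || (s2 == 1) ->
  let fM := linfun (@mulmxr _ 1 _ _ (diag_mx (\row_j cmp (c0 - 1, s1 - 1, s2 - 1) j))) in
  True.
Proof. by []. Qed.

Definition fMd (F : fieldType) (d : 'rV[F]_3) := linfun (@mulmxr _ 1 _ _ (diag_mx d)).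

Lemma ker_all (F : fieldType) (d : 'rV[F]_3) : (forall j, d 0 j = 0) ->
  \dim (lker (fMd d)) = 3%N.
Proof.
move=> hd; suff -> : lker (fMd d) = fullv by rewrite dim_rV.
apply/eqP; rewrite eqEsubv subvf /=; apply/subvP => a _.
rewrite memv_ker lfunE /=; apply/eqP/rowP => j; by rewrite diag_act hd mulr0 mxE.
Qed.

Lemma ker_none (F : fieldType) (d : 'rV[F]_3) : (forall j, d 0 j != 0) ->
  \dim (lker (fMd d)) = 0%N.
Proof.
move=> hd; suff -> : lker (fMd d) = 0%VS by rewrite dimv0.
apply/eqP; rewrite -subv0; apply/subvP => a.
rewrite memv_ker lfunE memv0 /= => /eqP /rowP ha; apply/eqP/rowP => j.
move: (ha j); rewrite diag_act !mxE => /eqP; rewrite mulf_eq0 (negbTE (hd j)) orbF.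
by move/eqP.
Qed.

Lemma ker_e0 (F : fieldType) (d : 'rV[F]_3) : d 0 i0 = 0 -> d 0 i1 != 0 -> d 0 i2 != 0 ->
  \dim (lker (fMd d)) = 1%N.
Proof.
move=> d0 d1 d2; pose e : 'rV[F]_3 := \row_j cmp (1, 0, 0) j.
have e0 : e != 0 by apply/negP => /eqP /rowP /(_ i0); rewrite !mxE /= => /eqP; rewrite oner_eq0.
suff -> : lker (fMd d) = <[e]>%VS by rewrite dim_vline e0.
apply/eqP; rewrite eqEsubv; apply/andP; split; apply/subvP => a.
  rewrite memv_ker lfunE /= => /eqP /rowP ha.
  have a1 : a 0 i1 = 0.
    by move: (ha i1); rewrite diag_act !mxE => /eqP; rewrite mulf_eq0 (negbTE d1) orbF => /eqP.
  have a2 : a 0 i2 = 0.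
    by move: (ha i2); rewrite diag_act !mxE => /eqP; rewrite mulf_eq0 (negbTE d2) orbF => /eqP.
  apply/vlineP; exists (a 0 i0); apply/rowP; apply: all3; rewrite /= !mxE /=.
  - by rewrite mulr1.
  - by rewrite a1 mulr0.
  - by rewrite a2 mulr0.
case/vlineP => k ->; rewrite memv_ker lfunE /=; apply/eqP/rowP; apply: all3.
all: by rewrite /= diag_act !mxE /= ?d0 ?mulr0 ?mul0r.
Qed.

Lemma img_e2 (F : fieldType) (d : 'rV[F]_3) : d 0 i0 = 0 -> d 0 i1 = 0 -> d 0 i2 != 0 ->
  \dim (limg (fMd d)) = 1%N.
Proof.
move=> d0 d1 d2; pose e : 'rV[F]_3 := \row_j cmp (0, 0, 1) j.
have e0 : e != 0 by apply/negP => /eqP /rowP /(_ i2); rewrite !mxE /= => /eqP; rewrite oner_eq0.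
suff -> : limg (fMd d) = <[e]>%VS by rewrite dim_vline e0.
apply/eqP; rewrite eqEsubv; apply/andP; split; apply/subvP => y.
  case/memv_imgP => a _ ->; rewrite lfunE /=; apply/vlineP; exists (a 0 i2 * d 0 i2).
  apply/rowP; apply: all3; by rewrite /= diag_act !mxE /= ?d0 ?d1 ?mulr0 ?mulr1.
case/vlineP => k ->; apply: memvZ.
have -> : e = fMd d ((d 0 i2)^-1 *: e).
  rewrite lfunE /=; apply/rowP; apply: all3; rewrite /= diag_act !mxE /= ?d0 ?d1 ?mulr0 //.
  by rewrite mulr1 mulVf.
exact: memv_img (memvf _).
Qed.

Lemma rowc (F : fieldType) (a b c : F) (j : 'I_3) :
  (\row_j cmp (a, b, c) j) 0 j = cmp (a, b, c) j.
Proof. by rewrite mxE. Qed.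

Lemma cmp0 (F : fieldType) (a b c : F) : cmp (a, b, c) i0 = a. Proof. by []. Qed.
Lemma cmp1 (F : fieldType) (a b c : F) : cmp (a, b, c) i1 = b. Proof. by []. Qed.
Lemma cmp2 (F : fieldType) (a b c : F) : cmp (a, b, c) i2 = c. Proof. by []. Qed.


Theorem theorem7 (m l : nat) (F : finFieldType) :
  #|F| = (2 ^ m)%N -> (4 < 2 ^ m)%N -> (l <= 3)%N ->
  exists C1 C2 : {vspace 'rV[F]_(2 ^ m + 2)},
    [/\ is_nkd_code C1 3 (2 ^ m), is_MDS C1,
        is_nkd_code C2 (2 ^ m - 1) 4, is_MDS C2
      & l_intersection_pair C1 C2 l].
Proof.
move=> hF h4 hl.
have hc : 2%N \in [pchar F] := card_finPcharP hF (isT : prime 2).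
have h2 : (2%:R : F) = 0 := pcharf0 hc.
have m0 : (0 < m)%N by case: m h4 hF.
have hq : (#|F|%:R : F) = 0 by rewrite hF natrX h2 expr0n eqn0Ngt m0.
have [w /andP[w0 w1]] : exists w : F, (w != 0) && (w != 1).
  case: (pickP (fun w : F => (w != 0) && (w != 1))) => [x hx | hall]; first by exists x.
  have sub : [set: F] \subset [set 0; 1].
    apply/subsetP => x _; move: (hall x) => /negbT; rewrite negb_and !negbK !inE.
    by case/orP => ->; rewrite ?orbT.
  have := subset_leq_card sub; rewrite cardsT cards2 eq_sym oner_eq0 /= hF.
  lia.
have cL : #|Lab F| = (#|F| + 2)%N by rewrite /Lab card_sum card_bool.
have E : (2 ^ m + 2 = #|Lab F|)%N by rewrite cL hF.
have E3 : (2 ^ m - 1 = #|Lab F| - 3)%N by rewrite cL hF; lia.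
have E2 : (2 ^ m = #|Lab F| - 2)%N by rewrite cL hF; lia.
rewrite E E3 E2.
have [c0 [s1 [s2 [hc0 hs1 hs2 hdim]]]] : exists c0 s1 s2 : F,
    [/\ c0 != 0, s1 != 0, s2 != 0 &
     \dim (lker (fMd (\row_j cmp (c0 - 1, s1 - 1, s2 - 1) j))) = l].
  have wm1 : w - 1 != 0 by rewrite subr_eq0.
  case: l hl => [|[|[|[|l]]]] // _.
  - have := @ker_none F (\row_j cmp (w - 1, w - 1, w - 1) j).
    move=> hk; exists w, w, w; split => //; apply: hk; apply: all3; by rewrite rowc ?cmp0 ?cmp1 ?cmp2.
  - have := @ker_e0 F (\row_j cmp (1 - 1, w - 1, w - 1) j).
    rewrite !rowc cmp0 cmp1 cmp2 => /(_ (subrr _) wm1 wm1) hk.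
    by exists 1, w, w; split => //; exact: oner_neq0.
  - have := @img_e2 F (\row_j cmp (1 - 1, 1 - 1, w - 1) j).
    rewrite !rowc cmp0 cmp1 cmp2 => /(_ (subrr _) (subrr _) wm1) hk.
    exists 1, 1, w; split => //; rewrite ?oner_neq0 //.
    have := limg_ker_dim (fMd (\row_j cmp (1 - 1, 1 - 1, w - 1) j)) fullv.
    rewrite capfv dim_rV hk => H; apply/eqP; by rewrite -(eqn_add2r 1) H.
  - have := @ker_all F (\row_j cmp (1 - 1, 1 - 1, 1 - 1) j).
    move=> hk; exists 1, 1, 1; split => //; rewrite ?oner_neq0 //; apply: hk.
    apply: all3; by rewrite rowc ?cmp0 ?cmp1 ?cmp2 subrr.
pose g := fun i : 'I_#|Lab F| => gp (enum_val i).
pose h := fun i : 'I_#|Lab F| => hp c0 s1 s2 (enum_val i).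
have hN : (3 < #|Lab F|)%N by rewrite cL hF; lia.
have ig : indep g.
  move=> i j k ij ik jk; apply: (indepL h2); by rewrite (inj_eq enum_val_inj).
have ih : indep h.
  move=> i j k ij ik jk; apply: (indepH h2) => //; by rewrite (inj_eq enum_val_inj).
have [hC1 hM1 hC2 hM2 hint] := generic hN ig ih.
exists (limg (linfun (@mulmxr _ 1 _ _ (Gm g)))), (lker (linfun (@mulmxr _ 1 _ _ (Hm h)))).
split => //.
rewrite /l_intersection_pair.
rewrite /g /h (Mdiag h2 hq w0 w1) in hint.
have := limg_ker_dim (fMd (\row_j cmp (c0 - 1, s1 - 1, s2 - 1) j)) fullv.
rewrite capfv dim_rV hdim.
move: hint; rewrite -/(fMd _).
move=> H1 H2; apply/eqP; rewrite -(eqn_add2r (\dim (limg (fMd (\row_j cmp (c0 - 1, s1 - 1, s2 - 1) j))))) H2.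

by apply/eqP; exact: H1.
Qed.
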